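(* Let $G$ be a group, $N$ a normal subgroup and $c\in\mathrm{C}_1(G;\mathbb{Z})$. The following are equivalent: (i) there exist $k,l\in\mathbb{Z}_{\ge0}$ and $x_1,\dots,x_k,\check x_1,\dots,\check x_l\in N$ with $c=x_1+\cdots+x_k-\check x_1-\cdots-\check x_l$ and $x_1\cdots x_k\check x_1^{-1}\cdots\check x_l^{-1}\in[G,N]$; (ii) $c\in\mathcal{C}_{\mathbb{Z}}(G,N)$.
   Context: $[G,N]$ is the subgroup generated by $[g,x]=gxg^{-1}x^{-1}$, $g\in G$, $x\in N$. $\mathrm{C}_1(G;A)$ is the free $A$-module on $G$, $\mathrm{C}_2(G;A)$ the free $A$-module on $G\times G$, $\partial(g_1,g_2)=g_2-g_1g_2+g_1$. $\mathrm{C}'_2(G,N;A)$ is the submodule generated by pairs $(g_1,g_2)$ with $g_1\in N$ or $g_2\in N$; $\mathrm{B}'_1(G,N;A)=\partial\,\mathrm{C}'_2(G,N;A)$; $\mathcal{C}_A(G,N)=\mathrm{C}_1(N;A)\cap\mathrm{B}'_1(G,N;A)$. *)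

(* Defs.v *)
From HB Require Import structures.
From mathcomp Require Import all_boot all_order.
From mathcomp Require Import monoid ssralg ssrint.

Set Implicit Arguments.
Unset Strict Implicit.
Unset Printing Implicit Defensive.

Import GRing.Theory.

Section Defs.
Variable G : groupType.

Local Open Scope group_scope.

Definition is_subgroup (H : G -> Prop) : Prop :=
  H 1 /\ (forall x y, H x -> H y -> H (x * y)) /\ (forall x, H x -> H x^-1).

Definition is_normal (N : G -> Prop) : Prop :=
  is_subgroup N /\ (forall g x, N x -> N (g * x * g^-1)).

Definition pcomm (g x : G) : G := g * x * g^-1 * x^-1.

Definition commGN (N : G -> Prop) (y : G) : Prop :=
  forall H : G -> Prop, is_subgroup H ->
    (forall g x, N x -> H (pcomm g x)) -> H y.

Definition gprod (s : seq G) : G := foldr (fun a b => a * b) 1 s.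

Local Close Scope group_scope.
Local Open Scope ring_scope.

(* 1-chains C_1(G;Z): finitely supported functions G -> int,
   i.e. the free Z-module on G. *)
Definition chain := G -> int.

Definition fin_supp (c : chain) : Prop :=
  exists s : seq G, forall g, c g != 0 -> g \in s.

Definition delta (g : G) : chain := fun h => if h == g then 1 else 0.

Definition chain0 : chain := fun _ => 0.
Definition chain_add (c d : chain) : chain := fun h => c h + d h.
Definition chain_opp (c : chain) : chain := fun h => - c h.
Definition chain_scale (a : int) (c : chain) : chain := fun h => a * c h.

Definition chain_of_seq (s : seq G) : chain := foldr (fun g c => chain_add (delta g) c) chain0 s.

(* boundary of a generator (g1,g2) of C_2(G;Z): g2 - g1 g2 + g1 *)
Definition bd (p : G * G) : chain :=
  chain_add (chain_add (delta p.2) (chain_opp (delta (p.1 * p.2)%g))) (delta p.1).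

(* boundary of a finite Z-linear combination of generators of C_2(G;Z),
   given as a list of (coefficient, generator) pairs. *)
Definition bd_comb (l : seq (int * (G * G))) : chain :=
  foldr (fun ap c => chain_add (chain_scale ap.1 (bd ap.2)) c) chain0 l.

Definition in_C1N (N : G -> Prop) (c : chain) : Prop :=
  forall g, c g != 0 -> N g.

(* c lies in B'_1(G,N;Z) = boundary of C'_2(G,N;Z), where C'_2 is generated
   by the pairs (g1,g2) with g1 in N or g2 in N. *)
Definition in_B1' (N : G -> Prop) (c : chain) : Prop :=
  exists l : seq (int * (G * G)),
    (forall ap, ap \in l -> N ap.2.1 \/ N ap.2.2) /\ c = bd_comb l.

Definition in_scrC (N : G -> Prop) (c : chain) : Prop :=
  in_C1N N c /\ in_B1' N c.

End Defs.

(* Main.v *)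
Require Import Defs.
From HB Require Import structures.
From mathcomp Require Import all_boot all_order.
From mathcomp Require Import monoid ssralg ssrint.
From mathcomp Require Import ssrnum ring zify.
From Stdlib Require Import FunctionalExtensionality PropExtensionality ClassicalEpsilon.

Set Implicit Arguments.
Unset Strict Implicit.
Unset Printing Implicit Defensive.
Import Order.TTheory GRing.Theory Num.Theory.

Section S.
Variable G : groupType.
Variable N : G -> Prop.
Hypothesis hN : is_normal N.

Local Open Scope group_scope.

Lemma N1 : N 1. Proof. by case: hN => [[]]. Qed.
Lemma NM x y : N x -> N y -> N (x * y). Proof. by case: hN => [[_ []]]; auto. Qed.
Lemma NV x : N x -> N x^-1. Proof. by case: hN => [[_ []]]; auto. Qed.
Lemma NJ g x : N x -> N (g * x * g^-1). Proof. by case: hN; auto. Qed.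

Lemma C1 : commGN N 1. Proof. by move=> H [? _] _. Qed.
Lemma CM x y : commGN N x -> commGN N y -> commGN N (x * y).
Proof. move=> hx hy H hH hg; case: (hH) => _ [hm _]; apply: hm; [exact: hx|exact: hy]. Qed.
Lemma CV x : commGN N x -> commGN N x^-1.
Proof. move=> hx H hH hg; case: (hH) => _ [_ hi]; apply: hi; exact: hx. Qed.
Lemma Cgen g x : N x -> commGN N (pcomm g x).
Proof. by move=> hx H _ hg; apply: hg. Qed.

Local Close Scope group_scope.
Local Open Scope ring_scope.

Definition B := in_B1' N.

Lemma bd_comb_cat (l1 l2 : seq (int * (G * G))) h :
  bd_comb (l1 ++ l2) h = bd_comb l1 h + bd_comb l2 h.
Proof.
elim: l1 => [|a l1 IH] /=; first by rewrite /chain0 add0r.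
by rewrite /chain_add IH addrA.
Qed.

Lemma Bext c d : B c -> (forall h, c h = d h) -> B d.
Proof. by move=> hc e; have <- : c = d by apply: functional_extensionality. Qed.

Lemma B0 : B (@chain0 G).
Proof. by exists [::]. Qed.

Lemma Badd c d : B c -> B d -> B (chain_add c d).
Proof.
move=> [l1 [h1 ->]] [l2 [h2 ->]]; exists (l1 ++ l2); split.
  by move=> ap; rewrite mem_cat => /orP [] ?; auto.
by apply: functional_extensionality => h; rewrite bd_comb_cat.
Qed.

Lemma Bopp c : B c -> B (chain_opp c).
Proof.
move=> [l [hl ->]]; exists (map (fun ap => (- ap.1, ap.2)) l); split.
  by move=> ap /mapP [a ha ->] /=; apply: hl.
apply: functional_extensionality => h; elim: l {hl} => [|a l IH] /=.
  by rewrite /chain_opp /chain0 oppr0.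
by rewrite /chain_add /chain_scale -IH /chain_opp opprD mulNr.
Qed.

Lemma Bbd x y : N x \/ N y -> B (bd (x, y)).
Proof.
move=> hxy; exists [:: (1, (x, y))]; split.
  by move=> ap; rewrite inE => /eqP -> /=.
by apply: functional_extensionality => h; rewrite /= /chain_add /chain_scale /chain0 mul1r addr0.
Qed.

Ltac ptw := rewrite /bd_comb /bd /chain_add /chain_opp /chain_scale /chain0 /bd /=.

Lemma Bdelta1 : B (delta 1%g).
Proof. have := Bbd (or_introl (N1 : N 1%g)) (y:=1%g) => /Bext; apply => h; ptw; rewrite mulg1; ring. Qed.

Lemma Bdelta p : commGN N p -> B (delta p).
Proof.
move=> hp; have [] : N p /\ B (delta p); last by [].
apply: (hp (fun y => N y /\ B (delta y))); last first.
  move=> g x hx; split; first by apply: NM; [apply: NJ|apply: NV].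
  set y := (g * x * g^-1)%g.
  have hy : N y by apply: NJ.
  have e1 : (y * g = g * x)%g by rewrite /y -mulgA mulVg mulg1.
  have := Badd (Badd (Badd (Badd (Bopp (Bbd (or_introl hy) (y:=x^-1%g)))
       (Bbd (or_introl hx) (y:=x^-1%g))) (Bbd (or_introl N1) (y:=1%g)))
       (Bbd (or_introl hy) (y:=g))) (Bopp (Bbd (or_intror hx) (x:=g))).
  move/Bext; apply=> h; ptw; rewrite e1 mulgV mulg1; rewrite /pcomm -/y; ring.
split; first by split; [exact: N1|exact: Bdelta1].
split.
  move=> x y [hx bx] [hy by']; split; first exact: NM.
  have := Badd (Badd bx by') (Bopp (Bbd (or_introl hx) (y:=y))).
  by move/Bext; apply=> h; ptw; ring.
move=> x [hx bx]; split; first exact: NV.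
have := Badd (Badd (Bbd (or_introl hx) (y:=x^-1%g)) (Bopp bx)) Bdelta1.
by move/Bext; apply=> h; ptw; rewrite mulgV; ring.
Qed.

Definition sgn (b : bool) : int := if b then 1 else -1.
Definition schain (L : seq (bool * G)) : chain G :=
  foldr (fun p c => chain_add (chain_scale (sgn p.1) (delta p.2)) c) (@chain0 G) L.
Definition gv (f : G -> G) (b : bool) (g : G) : G := if b then f g else (f g)^-1%g.
Definition val f (L : seq (bool * G)) : G := foldr (fun p v => (gv f p.1 p.2 * v)%g) 1%g L.

Lemma Lval L : (forall p, p \in L -> N p.2) ->
  B (chain_add (schain L) (chain_opp (delta (val id L)))).
Proof.
elim: L => [|[b g] L IH] hL /=.
  have := Bopp Bdelta1; move/Bext; apply=> h; ptw; ring.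
have hg : N g by apply: (hL (b, g)); rewrite inE eqxx.
have {IH} IH : B (chain_add (schain L) (chain_opp (delta (val id L)))).
  by apply: IH => p hp; apply: hL; rewrite inE hp orbT.
clear hL; case: b => /=.
  have := Badd IH (Bbd (or_introl hg) (y:=val id L)).
  by move/Bext; apply=> h; ptw; ring.
have := Badd (Badd (Badd IH (Bbd (or_introl (NV hg)) (y:=val id L)))
   (Bopp (Bbd (or_introl hg) (y:=g^-1%g)))) (Bopp (Bbd (or_introl N1) (y:=1%g))).
by move/Bext; apply=> h; ptw; rewrite mulgV mulg1; ring.
Qed.


Lemma schain_cat A B' h : schain (A ++ B') h = schain A h + schain B' h.
Proof.
elim: A => [|p A IH] /=; first by rewrite /chain0 add0r.
by rewrite /chain_add IH addrA.
Qed.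

Lemma val_cat f A B' : val f (A ++ B') = (val f A * val f B')%g.
Proof. by elim: A => [|p A IH] /=; [rewrite mul1g | rewrite IH mulgA]. Qed.

Lemma valN f : (forall g, N (f g)) -> forall L, N (val f L).
Proof.
move=> fN; elim=> [|[b g] L IH] /=; first exact: N1.
by apply: NM => //; case: b => /=; [|apply: NV].
Qed.

Lemma sgnN b : sgn (~~ b) = - sgn b. Proof. by case: b. Qed.
Lemma gvN f b g : gv f (~~ b) g = (gv f b g)^-1%g. Proof. by case: b => //=; rewrite invgK. Qed.

Lemma notin_sign b g L : (~~ b, g) \notin L -> 0 <= sgn b * schain L g.
Proof.
elim: L => [|[b' g'] L IH] /=; first by rewrite /chain0 mulr0.
rewrite inE negb_or => /andP [hne /IH {}IH].
rewrite /chain_add /chain_scale mulrDr.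
have : 0 <= sgn b * (sgn b' * delta g' g).
  rewrite /delta; case: eqP => [eg|_]; last by rewrite !mulr0.
  by subst g'; case: b b' hne {IH} => [] [] //=; rewrite eqxx.
move=> h1; exact: addr_ge0.
Qed.

Lemma conj_trick (u a v : G) : (u * (a * (u^-1 * v)) = pcomm u a * (a * v))%g.
Proof. by rewrite /pcomm !mulgA mulgVK. Qed.

Lemma Zlem f : (forall g, N (f g)) -> forall L, (forall h, schain L h = 0) ->
  commGN N (val f L).
Proof.
move=> fN L; have [n] := ubnP (size L); elim: n L => // n IH [|[b g] L] /= hs hL0.
  exact: C1.
have hin : (~~ b, g) \in L.
  apply/negPn/negP => hn; move: (notin_sign hn) (hL0 g).
  rewrite /chain_add /chain_scale /delta eqxx mulr1; clear hn hL0.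
  case: b => /=; lia.
case/splitPr: hin hs hL0 => A B' hs hL0.
rewrite val_cat /= gvN conj_trick -val_cat.
apply: CM; first by apply: Cgen; apply: valN.
apply: IH; first by move: hs; rewrite !size_cat /=; lia.
move=> h; have := hL0 h.
rewrite /chain_add /chain_scale !schain_cat /= /chain_add /chain_scale sgnN mulNr.
lia.
Qed.


Definition Nb (g : G) : bool := if excluded_middle_informative (N g) then true else false.
Lemma NbP g : Nb g <-> N g.
Proof. by rewrite /Nb; case: excluded_middle_informative. Qed.

Definition rep (g : G) : G :=
  if Nb g then 1%g else epsilon (inhabits 1%g) (fun r => N (r^-1 * g)%g).
Definition fr (g : G) : G := ((rep g)^-1 * g)%g.

Lemma frN g : N (fr g).
Proof.
rewrite /fr /rep; case: ifP => [/NbP|_]; first by rewrite invg1 mul1g.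
apply: (epsilon_spec (inhabits 1%g) (fun r => N (r^-1 * g)%g)).
by exists g; rewrite mulVg; apply: N1.
Qed.

Lemma fr_id x : N x -> fr x = x.
Proof. by move=> /NbP hx; rewrite /fr /rep hx invg1 mul1g. Qed.

Lemma rep_eq g g' : (forall r, N (r^-1 * g)%g <-> N (r^-1 * g')%g) -> rep g = rep g'.
Proof.
move=> e; have e0 : (fun r => N (r^-1 * g)%g) = (fun r => N (r^-1 * g')%g).
  by apply: functional_extensionality => r; apply: propositional_extensionality.
have eb : Nb g = Nb g'.
  have := e 1%g; rewrite invg1 !mul1g => e1.
  by apply/idP/idP => /NbP h; apply/NbP; apply/e1.
by rewrite /rep eb e0.
Qed.

Lemma rep_l n g : N n -> rep (n * g)%g = rep g.
Proof.
move=> hn; apply: rep_eq => r.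
have e : (r^-1 * (n * g) = (r^-1 * n * r^-1^-1) * (r^-1 * g))%g.
  by rewrite invgK !mulgA mulgK.
rewrite e; split => h.
  have := NM (NV (NJ r^-1 hn)) h; by rewrite mulgA mulVg mul1g.
exact: NM (NJ _ hn) h.
Qed.

Lemma rep_r g n : N n -> rep (g * n)%g = rep g.
Proof.
move=> hn; apply: rep_eq => r; rewrite mulgA; split => h.
  by have := NM h (NV hn); rewrite mulgK.
exact: NM h hn.
Qed.

Definition trip b (x y : G) := [:: (b, y); (~~ b, (x * y)%g); (b, x)].

Lemma trip_ok b x y : N x \/ N y -> commGN N (val fr (trip b x y)).
Proof.
case=> h; rewrite /= gvN.
  rewrite /gv /fr rep_l // -/(fr x) fr_id //.
  case: b => /=.
    have -> : ((rep y)^-1 * y * (((rep y)^-1 * (x * y))^-1 * (x * 1)) =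
      pcomm (rep y)^-1 x^-1)%g.
      by rewrite /pcomm !invgM !invgK mulg1 !mulgA mulgK.
    by apply: Cgen; apply: NV.
  rewrite invgK; have -> : (((rep y)^-1 * y)^-1 * (((rep y)^-1 * (x * y)) * (x^-1 * 1)) =
      pcomm y^-1 x)%g.
    by rewrite /pcomm !invgM !invgK mulg1 !mulgA mulgK.
  by apply: Cgen.
rewrite /gv /fr rep_r // -/(fr y) fr_id //.
case: b => /=.
  have -> : (y * (((rep x)^-1 * (x * y))^-1 * ((rep x)^-1 * x * 1)) = 1)%g.
    by rewrite !invgM !invgK mulg1 !mulgA mulgV mul1g mulgK mulVg.
  exact: C1.
rewrite invgK; have -> : (y^-1 * (((rep x)^-1 * (x * y)) * (((rep x)^-1 * x)^-1 * 1)) =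
    pcomm y^-1 ((rep x)^-1 * x))%g.
  by rewrite /pcomm !invgM !invgK mulg1 !mulgA.
by apply: Cgen; apply: frN.
Qed.


Definition expand (ap : int * (G * G)) : seq (bool * G) :=
  flatten (nseq `|ap.1|%N (trip (0 <= ap.1) ap.2.1 ap.2.2)).
Definition Lexp (l : seq (int * (G * G))) := flatten (map expand l).

Lemma schain_nseq k T h : schain (flatten (nseq k T)) h = (k%:Z) * schain T h.
Proof.
elim: k => [|k IH] /=; first by rewrite /chain0 mul0r.
by rewrite schain_cat IH -addn1 PoszD; ring.
Qed.

Lemma schain_trip b x y h : schain (trip b x y) h = sgn b * bd (x, y) h.
Proof. by rewrite /= /bd /chain_add /chain_scale /chain_opp /chain0 sgnN /=; ring. Qed.

Lemma sgn_abs (a : int) : sgn (0 <= a) * (`|a|%N)%:Z = a.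
Proof. by case: a => n /=; rewrite ?mul1r // NegzE mulN1r. Qed.

Lemma schain_expand ap h : schain (expand ap) h = ap.1 * bd ap.2 h.
Proof.
case: ap => a [x y]; rewrite /expand /= schain_nseq schain_trip mulrA.
by rewrite [_ * sgn _]mulrC sgn_abs.
Qed.

Lemma schain_Lexp l h : schain (Lexp l) h = bd_comb l h.
Proof.
elim: l => [|ap l IH] //=.
by rewrite /Lexp /= schain_cat schain_expand -/(Lexp l) IH /chain_add /chain_scale.
Qed.

Lemma val_flatten_C f (Ts : seq (seq (bool * G))) :
  (forall T, T \in Ts -> commGN N (val f T)) -> commGN N (val f (flatten Ts)).
Proof.
elim: Ts => [|T Ts IH] hT /=; first exact: C1.
rewrite val_cat; apply: CM; first by apply: hT; rewrite inE eqxx.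
by apply: IH => T' hT'; apply: hT; rewrite inE hT' orbT.
Qed.

Lemma Lexp_ok l : (forall ap, ap \in l -> N ap.2.1 \/ N ap.2.2) ->
  commGN N (val fr (Lexp l)).
Proof.
move=> hl; apply: val_flatten_C => T /mapP [ap hap ->].
apply: val_flatten_C => T'; rewrite mem_nseq => /andP [_ /eqP ->].
exact: trip_ok (hl ap hap).
Qed.

Definition negL (L : seq (bool * G)) := map (fun p => (~~ p.1, p.2)) (rev L).

Lemma schain_negL L h : schain (negL L) h = - schain L h.
Proof.
elim: L => [|p L IH]; first by rewrite /= /chain0 oppr0.
rewrite /negL rev_cons -cats1 map_cat schain_cat -/(negL L) IH /= /chain_add /chain_scale /chain0 sgnN.
ring.
Qed.

Lemma val_negL f L : val f (negL L) = (val f L)^-1%g.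
Proof.
elim: L => [|p L IH]; first by rewrite /= invg1.
by rewrite /negL rev_cons -cats1 map_cat val_cat -/(negL L) IH /= gvN mulg1 invgM.
Qed.

Lemma equiv_val f L1 L2 : (forall g, N (f g)) ->
  (forall h, schain L1 h = schain L2 h) -> commGN N (val f L2) -> commGN N (val f L1).
Proof.
move=> fN e c2.
have c : commGN N (val f (L1 ++ negL L2)).
  by apply: Zlem => // h; rewrite schain_cat schain_negL e subrr.
rewrite val_cat val_negL in c.
by have := CM c c2; rewrite mulgVK.
Qed.

Lemma schain_filterN L h :
  schain (filter (fun p => Nb p.2) L) h = if Nb h then schain L h else 0.
Proof.
elim: L => [|[b g] L IH] /=; first by rewrite /chain0; case: ifP.
case: (eqVneq h g) => [eg|hne].
  subst h; case hg: (Nb g) => /=; first by rewrite /chain_add IH hg.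
  by rewrite IH hg.
have d0 : delta g h = 0 by rewrite /delta (negbTE hne).
case: (Nb g) => /=; rewrite /chain_add /chain_scale ?d0 ?mulr0 ?add0r IH //.

Qed.

Lemma schain_split L h : schain L h =
  schain (map (pair true) [seq p.2 | p <- L & p.1]) h +
  schain (map (pair false) [seq p.2 | p <- L & ~~ p.1]) h.
Proof.
elim: L => [|[b g] L IH] /=; first by rewrite /chain0 addr0.
by case: b => /=; rewrite /chain_add /chain_scale IH; ring.
Qed.

Lemma cos_true (xs : seq G) h : chain_of_seq xs h = schain (map (pair true) xs) h.
Proof.
elim: xs => [|x xs IH] //=.
by rewrite /chain_add /chain_scale IH mul1r.
Qed.

Lemma cos_false (xs : seq G) h : schain (map (pair false) xs) h = - chain_of_seq xs h.
Proof.
elim: xs => [|x xs IH] /=; first by rewrite /chain0 oppr0.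
by rewrite /chain_add /chain_scale IH; ring.
Qed.

Lemma val_true f (xs : seq G) : (forall x, x \in xs -> f x = x) ->
  val f (map (pair true) xs) = gprod xs.
Proof.
elim: xs => [|x xs IH] hx //=.
rewrite hx ?inE ?eqxx // IH // => y hy; apply: hx; by rewrite inE hy orbT.
Qed.

Lemma val_false f (xs : seq G) : (forall x, x \in xs -> f x = x) ->
  val f (map (pair false) xs) = gprod (map (fun y => y^-1%g) xs).
Proof.
elim: xs => [|x xs IH] hx //=.
rewrite hx ?inE ?eqxx // IH // => y hy; apply: hx; by rewrite inE hy orbT.
Qed.

Lemma cos_supp (s : seq G) h : chain_of_seq s h != 0 -> h \in s.
Proof.
elim: s => [|x s IH] /=; first by rewrite /chain0.
case: (eqVneq h x) => [-> _|hne]; first by rewrite mem_head.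
have d0 : delta x h = 0 by rewrite /delta (negbTE hne).
rewrite /chain_add d0 add0r inE => /IH ->; by rewrite orbT.
Qed.

End S.

Theorem lemma5p16 (G : groupType) (N : G -> Prop) (c : chain G) :
  is_normal N -> fin_supp c ->
  ((exists xs ys : seq G,
      (forall x, x \in xs -> N x) /\ (forall y, y \in ys -> N y) /\
      c = chain_add (chain_of_seq xs) (chain_opp (chain_of_seq ys)) /\
      commGN N (gprod xs * gprod (map (fun y => y^-1) ys))%g)
   <-> in_scrC N c).
Proof.
move=> hN _; split.
  move=> [xs [ys [hx [hy [-> hc]]]]]; split.
    move=> g; rewrite /chain_add /chain_opp => hne.
    case: (boolP (g \in xs)) => [/hx //|nx]; case: (boolP (g \in ys)) => [/hy //|ny].
    have e1 : chain_of_seq xs g = 0 by apply/eqP; move: nx; apply: contraNT; exact: cos_supp.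
    have e2 : chain_of_seq ys g = 0 by apply/eqP; move: ny; apply: contraNT; exact: cos_supp.
    by move: hne; rewrite e1 e2 oppr0 addr0 eqxx.
  set L := map (pair true) xs ++ map (pair false) ys.
  have hL : forall p, p \in L -> N p.2.
    move=> p; rewrite mem_cat => /orP [] /mapP [x hx' ->] /=; auto.
  have := Badd (Lval hN hL) (Bdelta hN hc).
  rewrite val_cat val_true // val_false //.
  move/Bext; apply=> h.
  rewrite /chain_add /chain_opp schain_cat cos_true cos_false; ring.
move=> [hC [l [hl ec]]]; subst c.
set L := Lexp l.
set LN := filter (fun p => Nb N p.2) L.
have hLN : forall h, schain LN h = bd_comb l h.
  move=> h; rewrite schain_filterN schain_Lexp.
  case hb: (Nb N h) => //; apply/esym/eqP; apply: contraFT hb => hne; apply/NbP; exact: hC hne.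
have fN := frN hN.
have cLN : commGN N (val (fr N) LN).
  apply: (equiv_val hN fN (L2 := L)); first by move=> h; rewrite hLN schain_Lexp.
  exact: Lexp_ok.
have hLNN : forall p, p \in LN -> N p.2.
  by move=> p; rewrite mem_filter => /andP [/NbP].
set xs := [seq p.2 | p <- LN & p.1].
set ys := [seq p.2 | p <- LN & ~~ p.1].
have hx : forall x, x \in xs -> N x.
  by move=> x /mapP [p]; rewrite mem_filter => /andP [_ /hLNN] ? ->.
have hy : forall x, x \in ys -> N x.
  by move=> x /mapP [p]; rewrite mem_filter => /andP [_ /hLNN] ? ->.
exists xs, ys; split; first exact: hx.
split; first exact: hy.
split.
  apply: functional_extensionality => h.
  by rewrite -hLN (schain_split LN) cos_false -cos_true /chain_add /chain_opp.
have := equiv_val hN fN (L1 := map (pair true) xs ++ map (pair false) ys) (L2 := LN).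
rewrite val_cat val_true; last by move=> x hxx; apply: (fr_id (hx x hxx)).
rewrite val_false; last by move=> x hxx; apply: (fr_id (hy x hxx)).
apply=> // h; by rewrite schain_cat (schain_split LN).
Qed.
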